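(* Let $k\in\mathbb{N}$. For purely even $k$-dimensional cubes $E,E'$ and a morphism $f\colon E\to E'$ given by the family $(f^\nu)$, let $E^-:=E$ and let $f^-\colon E^-\to E'^-$ be the morphism given by the family $(\mathrm{sgn}(\nu)f^\nu)$. Then $(\mathrm{id}_E)^-=\mathrm{id}_E$ and $(g\circ f)^-=g^-\circ f^-$ for all morphisms $f\colon E\to E'$, $g\colon E'\to E''$ of purely even $k$-dimensional cubes; hence ${}^-$ is a functor on the category of purely even $k$-dimensional cubes, which is inverse to itself and respects products.
   Context: $\mathcal{P}^k_+$: nonempty subsets of $\{1..k\}$; $\mathrm{Part}(I)$: set of partitions $\nu=\{\nu_1,\dots,\nu_\ell\}$ of $I$ into nonempty blocks, $\ell(\nu)=\ell$. A $k$-dimensional cube is a family $(E_I)_{I\in\mathcal{P}^k_+}$ of real vector spaces with total space $E=\bigoplus_IE_I$, written $v=\sum_Iv_I$; it is purely even if $E_I=\{0\}$ whenever $|I|$ is odd. A morphism of cubes $f\colon E\to E'$ is a map $\sum_Iv_I\mapsto\sum_I\sum_{\nu\in\mathrm{Part}(I)}f^\nu(v_{\nu_1},\dots,v_{\nu_{\ell(\nu)}})$ where each $f^\nu\colon E_{\nu_1}\times\dots\times E_{\nu_{\ell(\nu)}}\to E'_I$ is multilinear (blocks listed in lexicographic order, for sets compared as increasingly ordered tuples); composition is composition of maps, and products are $(E\times E')_I=E_I\times E'_I$. Sign of a partition $\nu$ of $I=\{i_1<\dots<i_s\}$: concatenate the elements of $\nu_1,\dots,\nu_\ell$ (each block in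 increasing order, blocks in lexicographic order) into a tuple, and $\mathrm{sgn}(\nu)$ is the sign of the permutation bringing this tuple to $(i_1,\dots,i_s)$. *)

(* Defs.v *)
From HB Require Import structures.
From mathcomp Require Import all_boot all_order all_algebra.
Set Implicit Arguments. Unset Strict Implicit. Unset Printing Implicit Defensive.
Import GRing.Theory.
Local Open Scope ring_scope.

Section Cubes.
Variables (R : fieldType) (k : nat).

(* Index sets: subsets of {1..k}, encoded as {set 'I_k}.  Only nonempty I
   are meaningful; the value of a cube at set0 is ignored everywhere. *)
Definition idx := {set 'I_k}.

Definition cube := idx -> lmodType R.

(* Total space E = (+)_{I nonempty} E_I, represented by dependent functions
   (finite product = direct sum); the component at set0 is irrelevant. *)
Definition total_space (E : cube) := forall I : idx, E I.

Definition purely_even (E : cube) : Prop :=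
  forall I : idx, odd #|I| -> forall v : E I, v = 0.

(* A morphism family: for each I and each partition nu of I (a set of blocks),
   a map f^nu.  Its arguments are indexed by the blocks themselves (so the
   lexicographic ordering of arguments is immaterial); f^nu may only depend
   on the components v_J for J in nu and must be multilinear in them. *)
Definition cube_family (E E' : cube) :=
  forall I : idx, {set idx} -> total_space E -> E' I.

Definition depends_only (E : cube) (W : Type) (P : {set idx})
  (F : total_space E -> W) : Prop :=
  forall v w : total_space E, (forall J, J \in P -> v J = w J) -> F v = F w.

Definition multilinear_on (E : cube) (W : lmodType R) (P : {set idx})
  (F : total_space E -> W) : Prop :=
  forall J, J \in P -> forall (v : total_space E) (a : R) (x y : E J),
    F (dfwith v (a *: x + y)) = a *: F (dfwith v x) + F (dfwith v y).

Definition is_morphism (E E' : cube) (F : cube_family E E') : Prop :=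
  forall (I : idx) (P : {set idx}), I != set0 -> partition P I ->
    depends_only P (F I P) /\ multilinear_on P (F I P).

Definition total_map (E E' : cube) (F : cube_family E E') (v : total_space E)
  : total_space E' :=
  fun I => \sum_(P : {set idx} | partition P I) F I P v.

Definition map_eq (E E' : cube) (f g : total_space E -> total_space E')
  : Prop := forall v I, I != set0 -> f v I = g v I.

Definition blockseq (J : idx) : seq nat := [seq val i | i <- enum J].

Fixpoint lexle (s t : seq nat) : bool :=
  match s, t with
  | [::], _ => true
  | _ :: _, [::] => false
  | x :: s', y :: t' => (x < y)%N || ((x == y) && lexle s' t')
  end.

Definition part_word (P : {set idx}) : seq nat :=
  flatten (sort lexle [seq blockseq J | J <- enum P]).

(* number of inversions of a sequence; the permutation sorting a sequence
   of distinct numbers has sign (-1)^(number of inversions) *)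
Definition inversions (s : seq nat) : nat :=
  \sum_(i < size s) \sum_(j < size s | (i < j)%N)
     (nth 0%N s j < nth 0%N s i)%N.

Definition sgn (P : {set idx}) : R := (-1) ^+ inversions (part_word P).

Definition minusF (E E' : cube) (F : cube_family E E') : cube_family E E' :=
  fun I P v => sgn P *: F I P v.

Definition prodc (E E' : cube) : cube := fun I => (E I * E' I)%type.

Definition pairF (E E' E'' : cube) (F : cube_family E E') (G : cube_family E E'')
  : cube_family E (prodc E' E'') := fun I P v => (F I P v, G I P v).

Definition fst_tot (E E' : cube) (v : total_space (prodc E E'))
  : total_space E := fun I => (v I).1.
Definition snd_tot (E E' : cube) (v : total_space (prodc E E'))
  : total_space E' := fun I => (v I).2.

End Cubes.

(* Main.v *)
Require Import Defs.
From HB Require Import structures.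
From mathcomp Require Import all_boot all_order all_algebra.
From Stdlib Require Import Lia.
From mathcomp Require Import zify ring.
Import GRing.Theory.
Local Open Scope ring_scope.
Set Implicit Arguments. Unset Strict Implicit.

Fixpoint inv (s : seq nat) : nat :=
  if s is x :: s' then (count (fun y => y < x) s' + inv s')%N else 0%N.

Lemma count_sum_nth (p : pred nat) (s : seq nat) :
  count p s = (\sum_(i < size s) p (nth 0%N s i))%N.
Proof.
elim: s => [|x s IH]; first by rewrite big_ord0.
by rewrite big_ord_recl /= IH.
Qed.

Lemma inversionsE s : inversions s = inv s.
Proof.
elim: s => [|x s IH]; first by rewrite /inversions big_ord0.
rewrite /inversions /= big_ord_recl /=.
congr (_ + _)%N.
- rewrite big_mkcond big_ord_recl /= add0n count_sum_nth.
  by apply: eq_bigr => j _ /=.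
- rewrite -IH /inversions; apply: eq_bigr => i _.
  rewrite big_mkcond big_ord_recl /= add0n [RHS]big_mkcond.
  by apply: eq_bigr => j _ /=.
Qed.

Definition cross (s t : seq nat) : nat := (\sum_(x <- s) count (fun y => y < x) t)%N.

Lemma cross_catr s t1 t2 : cross s (t1 ++ t2) = (cross s t1 + cross s t2)%N.
Proof. by rewrite /cross -big_split /=; apply: eq_bigr => x _; rewrite count_cat. Qed.

Lemma inv_cat s1 s2 : inv (s1 ++ s2) = (inv s1 + inv s2 + cross s1 s2)%N.
Proof.
elim: s1 => [|x s1 IH] /=; first by rewrite /cross big_nil !addn0.
rewrite IH /cross big_cons count_cat -/(cross s1 s2); lia.
Qed.

Lemma inv_sorted s : sorted ltn s -> inv s = 0%N.
Proof.
elim: s => [|x s IH] //= Hs.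
have Hp := Hs; rewrite (path_sortedE ltn_trans) in Hp.
case/andP: Hp => Hall Hsort.
rewrite IH // addn0; apply/eqP; rewrite -leqn0 leqNgt -has_count; apply/hasPn => y Hy.
by move/allP: Hall => /(_ y Hy) /= Hxy; rewrite -leqNgt ltnW.
Qed.

Section Sign.
Variables (R : fieldType) (k : nat).
Local Notation idx := (idx k).

Lemma blockseq_sorted (J : idx) : sorted ltn (blockseq J).
Proof.
rewrite /blockseq.
have Hs : subseq (enum J) (enum 'I_k) by rewrite enumT /enum_mem filter_subseq.
apply: (subseq_sorted ltn_trans (map_subseq val Hs)).
by rewrite val_enum_ord iota_ltn_sorted.
Qed.

Definition nn (A B : idx) : nat := (\sum_(x in A) \sum_(y in B) (y < x)%N)%N.

Lemma cross_blockseq (A B : idx) : cross (blockseq A) (blockseq B) = nn A B.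
Proof.
rewrite /cross /blockseq big_map big_enum /nn; apply: eq_bigr => x _.
rewrite count_map -big_enum -sum1_count big_mkcond /=; apply: eq_bigr => y _ /=.
by case: (y < x)%N.
Qed.

Definition eps (A B : idx) : R := (-1) ^+ nn A B.
Fixpoint sg (L : seq idx) : R :=
  if L is A :: L' then (\prod_(B <- L') eps A B) * sg L' else 1.

Lemma cross_flatten (A : idx) L :
  (-1) ^+ cross (blockseq A) (flatten [seq blockseq B | B <- L]) = \prod_(B <- L) eps A B :> R.
Proof.
elim: L => [|B L IH] /=.
  by rewrite big_nil /cross big1 // => x _.
by rewrite cross_catr exprD IH big_cons cross_blockseq.
Qed.

Definition Ls (P : {set idx}) := sort (relpre (@blockseq k) lexle) (enum P).

Lemma sgn_sg (P : {set idx}) : sgn R P = sg (Ls P).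
Proof.
rewrite /sgn /part_word sort_map /Ls.
elim: (sort _ _) => [|A L IH] /=; first by rewrite /inversions big_ord0.
rewrite inversionsE inv_cat inv_sorted ?blockseq_sorted // add0n -inversionsE exprD IH.
by rewrite cross_flatten mulrC.
Qed.

Lemma sg_cat L1 L2 : sg (L1 ++ L2) = sg L1 * sg L2 * \prod_(A <- L1) \prod_(B <- L2) eps A B.
Proof.
elim: L1 => [|A L1 IH] /=; first by rewrite big_nil mul1r mulr1.
rewrite IH big_cat big_cons /=; ring.
Qed.

Lemma sg_move L1 A L2 : (forall B, B \in L1 -> eps A B = eps B A) ->
  sg (L1 ++ A :: L2) = sg (A :: L1 ++ L2).
Proof.
move=> sym; rewrite sg_cat /= sg_cat big_cat /=.
have -> : \prod_(A0 <- L1) \prod_(B <- A :: L2) eps A0 B =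
   \prod_(A0 <- L1) (eps A0 A * \prod_(B <- L2) eps A0 B).
  by apply: eq_bigr => ? _; rewrite big_cons.
rewrite big_split /=.
have -> : \prod_(i <- L1) eps i A = \prod_(i <- L1) eps A i.
  by rewrite big_seq_cond [RHS]big_seq_cond; apply: eq_bigr => i /andP[Hi _]; rewrite sym.
ring.
Qed.

Lemma sg_perm L L' : {in L &, forall A B, eps A B = eps B A} -> perm_eq L L' -> sg L = sg L'.
Proof.
elim: L L' => [|A L1 IH] L' sym Hp.
  by move: Hp; rewrite perm_sym => /perm_nilP ->.
have HA : A \in L' by rewrite -(perm_mem Hp) mem_head.
case/splitPr: HA Hp => L2 L3 Hp.
have Hp' : perm_eq L1 (L2 ++ L3).
  by rewrite -(perm_cons A) (perm_trans Hp) // (perm_catCA L2 [:: A] L3).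
rewrite sg_move; last first.
  move=> B HB; apply: sym; first exact: mem_head.
  by rewrite (perm_mem Hp) mem_cat HB.
rewrite /= (IH (L2 ++ L3)) //; last by move=> x y Hx Hy; apply: sym; rewrite inE ?Hx ?Hy orbT.
by rewrite (perm_big _ Hp').
Qed.

Lemma sign_sum (I : finType) (P : pred I) (f : I -> nat) :
  (-1) ^+ (\sum_(i | P i) f i)%N = \prod_(i | P i) (-1) ^+ f i :> R.
Proof. exact: (big_morph (fun n => (-1) ^+ n) (fun m n => exprD _ m n) (expr0 _)). Qed.

Lemma eps_coverl (P : {set idx}) B : trivIset P -> eps (cover P) B = \prod_(A in P) eps A B.
Proof. by move=> HP; rewrite /eps /nn big_trivIset // sign_sum. Qed.

Lemma eps_coverr A (P : {set idx}) : trivIset P -> eps A (cover P) = \prod_(B in P) eps A B.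
Proof.
move=> HP; rewrite /eps /nn.
under eq_bigr do rewrite big_trivIset //.
by rewrite exchange_big sign_sum.
Qed.

Lemma nn_sym (A B : idx) : [disjoint A & B] -> (nn A B + nn B A = #|A| * #|B|)%N.
Proof.
move=> dAB; rewrite /nn [X in (_ + X)%N]exchange_big -big_split /=.
rewrite -sum1_card big_distrl /=; apply: eq_bigr => x xA.
rewrite -big_split mul1n -sum1_card /=; apply: eq_bigr => y yB.
have : x != y by apply: contraTneq yB => <-; rewrite (disjointFr dAB xA).
by rewrite neq_ltn; case: ltngtP.
Qed.

Lemma eps_sym (A B : idx) : [disjoint A & B] -> ~~ odd #|A| -> ~~ odd #|B| -> eps A B = eps B A.
Proof.
move=> dAB oA oB; have := nn_sym dAB.
move/(congr1 odd); rewrite oddD oddM (negbTE oA) /= => H.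
rewrite /eps -signr_odd -[in RHS]signr_odd.
by move: H; case: (odd (nn A B)); case: (odd (nn B A)).
Qed.

Lemma triv_eq (T : finType) (P : {set {set T}}) A B x :
  trivIset P -> A \in P -> B \in P -> x \in A -> x \in B -> A = B.
Proof.
move=> /trivIsetP tP HA HB xA xB; have [//|nAB] := eqVneq A B.
by have := tP _ _ HA HB nAB; rewrite -setI_eq0 => /eqP/setP/(_ x); rewrite !inE xA xB.
Qed.

Lemma block_sub (T : finType) (P : {set {set T}}) D A : partition P D -> A \in P -> A \subset D.
Proof. by move=> HP HA; rewrite -(cover_partition HP); apply: bigcup_sup. Qed.

Lemma part_bigcup (mu : {set idx}) (I : idx) (c : idx -> {set idx}) :
  partition mu I -> (forall J, J \in mu -> partition (c J) J) ->
  partition (\bigcup_(J in mu) c J) I.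
Proof.
move=> Hmu Hc; apply/and3P; split.
- apply/eqP/setP => x; rewrite -(cover_partition Hmu); apply/bigcupP/bigcupP.
  + case=> B /bigcupP [J HJ HB] xB; exists J => //.
    by rewrite -(cover_partition (Hc J HJ)); apply/bigcupP; exists B.
  + case=> J HJ xJ; move: xJ; rewrite -(cover_partition (Hc J HJ)) => /bigcupP [B HB xB].
    by exists B => //; apply/bigcupP; exists J.
- apply/trivIsetP => A B /bigcupP [J1 HJ1 HA] /bigcupP [J2 HJ2 HB] nAB.
  have [eJ|nJ] := eqVneq J1 J2.
    subst J2; have /and3P [_ tc _] := Hc J1 HJ1.
    by move/trivIsetP: tc; apply.
  have /and3P [_ tmu _] := Hmu.
  apply: (disjointW (block_sub (Hc J1 HJ1) HA) (block_sub (Hc J2 HJ2) HB)).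
  by move/trivIsetP: tmu; apply.
- apply/bigcupP => [[J HJ H0]].
  by have /and3P [_ _ /negP] := Hc J HJ.
Qed.

Lemma part_sub_eq (nu rho : {set idx}) (J : idx) :
  trivIset nu -> set0 \notin nu -> partition rho J -> rho \subset nu ->
  rho = [set B in nu | B \subset J].
Proof.
move=> tnu n0 Hrho Hsub; apply/setP => B; rewrite inE.
apply/idP/andP.
  by move=> HB; split; [exact: (subsetP Hsub) | exact: block_sub Hrho HB].
case=> HB BJ.
have /set0Pn [x xB] : B != set0 by apply: contraNneq n0 => <-.
have : x \in cover rho by rewrite (cover_partition Hrho) (subsetP BJ).
case/bigcupP => B' HB' xB'.
by rewrite (triv_eq tnu HB (subsetP Hsub _ HB') xB xB').
Qed.

Lemma perm_Ls (P : {set idx}) : perm_eq (Ls P) (enum P).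
Proof. by rewrite /Ls perm_sort. Qed.

Lemma mem_Ls (P : {set idx}) A : (A \in Ls P) = (A \in P).
Proof. by rewrite (perm_mem (perm_Ls P)) mem_enum. Qed.

Lemma uniq_Ls (P : {set idx}) : uniq (Ls P).
Proof. by rewrite (perm_uniq (perm_Ls P)) enum_uniq. Qed.

Lemma big_Ls (P : {set idx}) (F : idx -> R) : \prod_(A <- Ls P) F A = \prod_(A in P) F A.
Proof. by rewrite (perm_big _ (perm_Ls P)) big_enum. Qed.

Lemma sg_flatten (c : idx -> {set idx}) M : (forall J, J \in M -> partition (c J) J) ->
  sg (flatten [seq Ls (c J) | J <- M]) = sg M * \prod_(J <- M) sg (Ls (c J)).
Proof.
elim: M => [|J1 M IH] HM /=; first by rewrite big_nil mulr1.
rewrite sg_cat IH; last by move=> J HJ; apply: HM; rewrite inE HJ orbT.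
have -> : \prod_(A <- Ls (c J1)) \prod_(B <- flatten [seq Ls (c J) | J <- M]) eps A B
        = \prod_(J2 <- M) eps J1 J2.
  under eq_bigr do rewrite big_flatten big_map.
  rewrite exchange_big /= big_seq_cond [RHS]big_seq_cond; apply: eq_bigr => J2 /andP[HJ2 _].
  have P1 := HM J1 (mem_head _ _).
  have P2 : partition (c J2) J2 by apply: HM; rewrite inE HJ2 orbT.
  transitivity (eps (cover (c J1)) (cover (c J2))); last by rewrite (cover_partition P1) (cover_partition P2).
  rewrite eps_coverl; last by case/and3P: P1.
  rewrite big_Ls; apply: eq_bigr => A _.
  rewrite eps_coverr; last by case/and3P: P2.
  by rewrite big_Ls.
rewrite big_cons; ring.
Qed.

Lemma uniq_flat (c : idx -> {set idx}) M : uniq M ->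
  (forall J1 J2 B, J1 \in M -> J2 \in M -> B \in c J1 -> B \in c J2 -> J1 = J2) ->
  uniq (flatten [seq Ls (c J) | J <- M]).
Proof.
elim: M => [|J M IH] //= /andP [nJ uM] inj.
rewrite cat_uniq uniq_Ls IH ?andbT //; last first.
  by move=> J1 J2 B H1 H2; apply: inj; rewrite inE ?H1 ?H2 orbT.
apply/hasPn => B /flattenP [s /mapP [J' HJ' ->]]; rewrite !mem_Ls => HB'.
apply/negP => HB.
have eJ : J = J' by apply: (inj J J' B) => //; rewrite ?mem_head // inE HJ' orbT.
by move: nJ; rewrite eJ HJ'.
Qed.

Lemma sgn_comp (mu : {set idx}) (I : idx) (c : idx -> {set idx}) :
  partition mu I -> (forall J, J \in mu -> partition (c J) J) ->
  (forall J B, J \in mu -> B \in c J -> ~~ odd #|B|) ->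
  sgn R (\bigcup_(J in mu) c J) = sgn R mu * \prod_(J in mu) sgn R (c J).
Proof.
move=> Hmu Hc Hev.
have Hnu := part_bigcup Hmu Hc.
have inj : forall J1 J2 B, J1 \in mu -> J2 \in mu -> B \in c J1 -> B \in c J2 -> J1 = J2.
  move=> J1 J2 B H1 H2 B1 B2.
  have /set0Pn [x xB] : B != set0.
    by apply: contraTneq B1 => ->; case/and3P: (Hc J1 H1).
  apply: (triv_eq (x:=x) _ H1 H2); first by case/and3P: Hmu.
    exact: (subsetP (block_sub (Hc J1 H1) B1)).
  exact: (subsetP (block_sub (Hc J2 H2) B2)).
have Hp : perm_eq (Ls (\bigcup_(J in mu) c J)) (flatten [seq Ls (c J) | J <- Ls mu]).
  apply: uniq_perm; [exact: uniq_Ls | apply: uniq_flat | ].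
  - exact: uniq_Ls.
  - by move=> J1 J2 B; rewrite !mem_Ls; apply: inj.
  - move=> B; rewrite mem_Ls; apply/bigcupP/flattenP.
    + case=> J HJ HB; exists (Ls (c J)); first by apply: map_f; rewrite mem_Ls.
      by rewrite mem_Ls.
    + case=> s /mapP [J HJ ->] HB; exists J; first by rewrite -mem_Ls.
      by rewrite -mem_Ls.
have Hs : {in Ls (\bigcup_(J in mu) c J) &, forall A B, eps A B = eps B A}.
  move=> A B; rewrite !mem_Ls => HA HB.
  have [->//|nAB] := eqVneq A B.
  apply: eps_sym.
  - by case/and3P: Hnu => _ /trivIsetP tn _; apply: tn.
  - by case/bigcupP: HA => J HJ HA; apply: Hev HA.
  - by case/bigcupP: HB => J HJ HB; apply: Hev HB.
rewrite !sgn_sg (sg_perm Hs Hp) sg_flatten; last by move=> J; rewrite mem_Ls; apply: Hc.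
by rewrite big_Ls; under eq_bigr do rewrite -sgn_sg.
Qed.
End Sign.
Section Morph.
Variables (R : fieldType) (k : nat).
Local Notation idx := (idx k).

Section Lin.
Variables (E : cube R k) (W : lmodType R) (P : {set idx}) (Fm : total_space E -> W).
Hypothesis (Hdep : depends_only P Fm) (Hlin : multilinear_on P Fm).

Lemma ml0 J (v : total_space E) : J \in P -> Fm (dfwith v (0 : E J)) = 0.
Proof.
move=> HJ; have := Hlin HJ v 1 0 0; rewrite scale1r addr0.
set X := Fm _ => H; rewrite scale1r in H.
have : X + X = X + 0 by rewrite addr0 -H.
by move/addrI.
Qed.

Lemma mlZ J (v : total_space E) a (x : E J) : J \in P ->
  Fm (dfwith v (a *: x)) = a *: Fm (dfwith v x).
Proof. by move=> HJ; have := Hlin HJ v a x 0; rewrite addr0 ml0 // addr0. Qed.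

Lemma mlD J (v : total_space E) (x y : E J) : J \in P ->
  Fm (dfwith v (x + y)) = Fm (dfwith v x) + Fm (dfwith v y).
Proof. by move=> HJ; have := Hlin HJ v 1 x y; rewrite !scale1r. Qed.

Lemma ml_sum J (v : total_space E) (I : finType) (Pr : pred I) (a : I -> R) (f : I -> E J) :
  J \in P ->
  Fm (dfwith v (\sum_(i | Pr i) a i *: f i)) = \sum_(i | Pr i) a i *: Fm (dfwith v (f i)).
Proof.
move=> HJ.
rewrite (big_morph (fun x : E J => Fm (dfwith v x)) (id1 := 0) (op1 := +%R) (fun x y => mlD v x y HJ) (ml0 v HJ)).
by apply: eq_bigr => i _; rewrite mlZ.
Qed.

Lemma dfwith_eq J (v : total_space E) (x : E J) j :
  dfwith v x j = (if J =P j is ReflectT e then ecast j (E j) e x else v j).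
Proof. by []. Qed.

Lemma ml_zero J (v : total_space E) : J \in P -> v J = 0 -> Fm v = 0.
Proof.
move=> HJ vJ; rewrite -(ml0 v HJ); apply: Hdep => j _.
have [<-|nJ] := eqVneq J j; first by rewrite dfwith_in.
by rewrite dfwith_out.
Qed.

Definition valid (Q : {set idx}) (S : idx -> pred {set idx}) (c : {ffun idx -> {set idx}}) : bool :=
  [forall J, if J \in Q then S J (c J) else c J == set0].

Lemma expand_gen (S : idx -> pred {set idx}) (a : idx -> {set idx} -> R)
  (u : forall J, {set idx} -> E J) :
  forall n (Q : {set idx}), #|Q| = n -> Q \subset P -> forall v : total_space E,
  Fm (fun J => if J \in Q then \sum_(r | S J r) a J r *: u J r else v J) =
  \sum_(c | valid Q S c) (\prod_(J in Q) a J (c J)) *: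
      Fm (fun J => if J \in Q then u J (c J) else v J).
Proof.
elim=> [|n IH] Q HQ HQP v.
  move/eqP: HQ; rewrite cards_eq0 => /eqP ->.
  rewrite (big_pred1 [ffun=> set0]); last first.
    move=> c; rewrite /valid /=; apply/forallP/eqP => [H|->].
      by apply/ffunP => J; rewrite ffunE; move: (H J); rewrite in_set0 => /eqP.
    by move=> J; rewrite in_set0 ffunE.
  rewrite big_set0 scale1r; apply: Hdep => J _; by rewrite in_set0.
have [J0 HJ0] : exists J0, J0 \in Q.
  by apply/set0Pn; rewrite -card_gt0 HQ.
have HQ' : #|Q :\ J0| = n by move: HQ; rewrite (cardsD1 J0 Q) HJ0 add1n => -[].
have HQ'P : Q :\ J0 \subset P by apply: subset_trans HQP; apply: subsetDl.
have HJ0P : J0 \in P := subsetP HQP _ HJ0.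
have nQ' : (J0 \in Q :\ J0) = false by rewrite in_setD1 eqxx.
transitivity (Fm (dfwith (fun J => if J \in Q :\ J0 then \sum_(r | S J r) a J r *: u J r else v J)
   (\sum_(r | S J0 r) a J0 r *: u J0 r))).
  apply: Hdep => j _; have [<-|nJ] := eqVneq J0 j; first by rewrite dfwith_in HJ0.
  by rewrite dfwith_out // in_setD1 eq_sym nJ.
rewrite ml_sum //.
have step : forall r, Fm (dfwith (fun J => if J \in Q :\ J0 then \sum_(r | S J r) a J r *: u J r else v J) (u J0 r)) =
   \sum_(c | valid (Q :\ J0) S c) (\prod_(J in Q :\ J0) a J (c J)) *:
      Fm (fun J => if J \in Q :\ J0 then u J (c J) else dfwith v (u J0 r) J).
  move=> r; rewrite -IH //; apply: Hdep => j _; have [<-|nJ] := eqVneq J0 j.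
    by rewrite !dfwith_in nQ' ?dfwith_in.
  by rewrite !dfwith_out.
under eq_bigr => r _ do rewrite step scaler_sumr.
rewrite pair_big_dep /=.
rewrite (reindex_onto (fun p : {set idx} * {ffun idx -> {set idx}} => [ffun J => if J == J0 then p.1 else p.2 J])
   (fun c => (c J0, [ffun J => if J == J0 then set0 else c J]))); last first.
  by move=> c _; apply/ffunP => J; rewrite !ffunE /=; case: eqP => [->|].
apply: eq_big.

  case=> r c /=; rewrite /valid; apply/andP/andP => [[Sr /forallP Vc] | [/forallP Vh /eqP Eh]].
    split.
      apply/forallP => J; rewrite !ffunE; have [->|nJ] := eqVneq J J0; first by rewrite HJ0.
      by move: (Vc J); rewrite in_setD1 nJ.
    apply/eqP; congr pair; first by rewrite ffunE eqxx.
    apply/ffunP => J; rewrite !ffunE; case: eqP => [->|//].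
    by move: (Vc J0); rewrite nQ' => /eqP ->.
  have cJ0 : c J0 = set0.
    by case: Eh => _ /ffunP /(_ J0); rewrite ffunE eqxx => <-.
  split; first by move: (Vh J0); rewrite !ffunE eqxx HJ0.
  apply/forallP => J; have [->|nJ] := eqVneq J J0; first by rewrite nQ' cJ0.
  by move: (Vh J); rewrite !ffunE (negbTE nJ) in_setD1 nJ.
case=> r c /=; rewrite /valid => /andP [Sr /forallP Vc].
rewrite (big_setD1 J0 HJ0) /= ffunE eqxx scalerA.
have -> : \prod_(J in Q :\ J0) a J ([ffun J1 => if J1 == J0 then r else c J1] J) =
          \prod_(J in Q :\ J0) a J (c J).
  by apply: eq_bigr => J; rewrite in_setD1 ffunE => /andP [/negbTE -> _].
congr (_ *: _); apply: Hdep => j _.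
have [->|nJ] := eqVneq j J0.
  by rewrite nQ' dfwith_in HJ0 ffunE eqxx.
by rewrite in_setD1 nJ /= ffunE (negbTE nJ) dfwith_out // eq_sym.
Qed.

Lemma expand (S : idx -> pred {set idx}) (a : idx -> {set idx} -> R)
  (u : forall J, {set idx} -> E J) :
  Fm (fun J => \sum_(r | S J r) a J r *: u J r) =
  \sum_(c | valid P S c) (\prod_(J in P) a J (c J)) *: Fm (fun J => u J (c J)).
Proof.
have := @expand_gen S a u _ P erefl (subxx P) (fun J => 0).
have -> : Fm (fun J => if J \in P then \sum_(r | S J r) a J r *: u J r else 0) =
          Fm (fun J => \sum_(r | S J r) a J r *: u J r).
  by apply: Hdep => J ->.
move=> ->; apply: eq_bigr => c _; congr (_ *: _); apply: Hdep => J ->; by [].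
Qed.
End Lin.

Definition restr (E : cube R k) (nu : {set idx}) (v : total_space E) : total_space E :=
  fun J => if J \in nu then v J else 0.

Section MorphLemmas.
Variables (E E' : cube R k) (F : cube_family E E').
Hypothesis HF : is_morphism F.

Lemma mor_zero (I : idx) (nu : {set idx}) (v : total_space E) B :
  I != set0 -> partition nu I -> B \in nu -> v B = 0 -> F I nu v = 0.
Proof. by move=> nI Hp HB vB; case: (HF nI Hp) => dep lin; apply: (ml_zero dep lin HB vB). Qed.

Lemma mor_dep (I : idx) (nu : {set idx}) (v w : total_space E) :
  I != set0 -> partition nu I -> (forall J, J \in nu -> v J = w J) -> F I nu v = F I nu w.
Proof. by move=> nI Hp H; case: (HF nI Hp) => dep _; apply: dep. Qed.

Lemma part_same (rho nu : {set idx}) I :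
  partition rho I -> partition nu I -> rho \subset nu -> rho = nu.
Proof.
move=> Hr Hn Hs; rewrite (part_sub_eq _ _ Hr Hs); last by case/and3P: Hn.
  by apply/setP => B; rewrite inE andb_idr // => HB; apply: block_sub Hn HB.
by case/and3P: Hn.
Qed.

Lemma mor_other (J : idx) (rho nu : {set idx}) (v : total_space E) :
  J != set0 -> partition rho J -> ~~ (rho \subset nu) -> F J rho (restr nu v) = 0.
Proof.
move=> nJ Hr /subsetPn [B HB nB]; apply: (mor_zero nJ Hr HB).
by rewrite /restr (negbTE nB).
Qed.

Lemma support (I : idx) (nu : {set idx}) (v : total_space E) :
  I != set0 -> partition nu I -> F I nu v = total_map F (restr nu v) I.
Proof.
move=> nI Hp; rewrite /total_map (bigD1 nu Hp) /= big1 ?addr0.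
  by apply: mor_dep => // J HJ; rewrite /restr HJ.
move=> rho /andP [Hr nr]; apply: mor_other => //.
by apply: contra nr => Hs; rewrite (part_same Hr Hp Hs).
Qed.

Lemma W_val (J : idx) (rho nu : {set idx}) (v : total_space E) :
  trivIset nu -> set0 \notin nu -> J != set0 -> partition rho J -> rho \subset nu ->
  total_map F (restr nu v) J = F J rho v.
Proof.
move=> tn n0 nJ Hr Hs; rewrite /total_map (bigD1 rho Hr) /= big1 ?addr0.
  by apply: mor_dep => // B HB; rewrite /restr (subsetP Hs _ HB).
move=> rho' /andP [Hr' nr]; apply: mor_other => //.
apply: contra nr => Hs'.
by rewrite (part_sub_eq tn n0 Hr Hs) (part_sub_eq tn n0 Hr' Hs').
Qed.

Lemma W_zero (J : idx) (nu : {set idx}) (v : total_space E) :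
  trivIset nu -> set0 \notin nu -> J != set0 -> ~~ partition [set B in nu | B \subset J] J ->
  total_map F (restr nu v) J = 0.
Proof.
move=> tn n0 nJ nP; rewrite /total_map big1 // => rho Hr.
apply: mor_other => //; apply: contra nP => Hs.
by rewrite -(part_sub_eq tn n0 Hr Hs).
Qed.
End MorphLemmas.

End Morph.

Section Final.
Variables (R : fieldType) (k : nat).
Local Notation idx := (idx k).

Lemma sgn2 (P : {set idx}) : sgn R P * sgn R P = 1.
Proof. by rewrite /sgn -exprD -signr_odd oddD addbb. Qed.

Lemma minus_morph (E E' : cube R k) (F : cube_family E E') :
  is_morphism F -> is_morphism (minusF F).
Proof.
move=> HF I P nI Hp; case: (HF I P nI Hp) => dep lin; split.
  by move=> v w H; rewrite /minusF (dep v w H).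
by move=> J HJ v a x y; rewrite /minusF lin // scalerDr !scalerA mulrC.
Qed.

Lemma minus_minus (E E' : cube R k) (F : cube_family E E') I P v :
  minusF (minusF F) I P v = F I P v.
Proof. by rewrite /minusF scalerA sgn2 scale1r. Qed.

Lemma sgn_set1 (I : idx) : sgn R [set I] = 1.
Proof. by rewrite sgn_sg /Ls enum_set1 /= big_nil mulr1. Qed.

Lemma minus_local (E E' : cube R k) (F : cube_family E E') (phi : forall I, E I -> E' I) :
  is_morphism F -> (forall I, phi I 0 = 0) ->
  map_eq (total_map F) (fun v I => phi I (v I)) ->
  map_eq (total_map (minusF F)) (fun v I => phi I (v I)).
Proof.
move=> HF phi0 H v I nI; rewrite -(H v I nI) /total_map /minusF; apply: eq_bigr => nu Hnu.
rewrite (support HF v nI Hnu) H // /restr.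
case: ifP => Inu; last by rewrite phi0 scaler0.
have -> : nu = [set I].
  apply/setP => B; rewrite inE; apply/idP/eqP => [HB|->//].
  have /set0Pn [x xB] : B != set0 by apply: contraTneq HB => ->; case/and3P: (Hnu).
  case/and3P: (Hnu) => _ tn _.
  apply: (triv_eq tn HB Inu xB); exact: (subsetP (block_sub Hnu HB)).
by rewrite sgn_set1 scale1r.
Qed.

Lemma nuJ_bigcup (mu : {set idx}) (I : idx) (c : idx -> {set idx}) J :
  partition mu I -> (forall J, J \in mu -> partition (c J) J) -> J \in mu ->
  [set B in \bigcup_(J in mu) c J | B \subset J] = c J.
Proof.
move=> Hmu Hc HJ; have := part_bigcup Hmu Hc => /and3P [_ tn n0].
symmetry; apply: part_sub_eq => //; first exact: Hc.
by apply/subsetP => B HB; apply/bigcupP; exists J.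
Qed.

Lemma minus_comp (E E' E'' : cube R k) (F : cube_family E E') (G : cube_family E' E'')
  (H : cube_family E E'') :
  purely_even E -> is_morphism F -> is_morphism G -> is_morphism H ->
  map_eq (total_map H) (fun v => total_map G (total_map F v)) ->
  map_eq (total_map (minusF H)) (fun v => total_map (minusF G) (total_map (minusF F) v)).
Proof.
move=> evE HF HG HH Hc v I nI.
rewrite {1}/total_map /minusF.
under eq_bigr => nu Hnu do rewrite (support HH v nI Hnu) (Hc _ _ nI) {1}/total_map scaler_sumr.
rewrite exchange_big /= {1}/total_map; apply: eq_bigr => mu Hmu.
case: (HG I mu nI Hmu) => depG linG.
have -> : total_map (minusF F) v = fun J => \sum_(r | (fun J r => partition r J) J r)
     (fun J r => sgn R r) J r *: (fun J r => F J r v) J r by [].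
rewrite (expand depG linG) scaler_sumr.
have mu0 : set0 \notin mu by case/and3P: Hmu.
have nJ : forall J, J \in mu -> J != set0 by move=> J HJ; apply: contraNneq mu0 => <-.
rewrite (bigID (fun nu : {set idx} => [forall J in mu, partition [set B in nu | B \subset J] J])) /=.
rewrite [X in _ + X]big1 ?addr0; last first.
  move=> nu /andP [Hnu /forallPn [J]]; rewrite negb_imply => /andP [HJ nP].
  case/and3P: (Hnu) => _ tn n0.
  by rewrite (ml_zero depG linG HJ (W_zero HF v tn n0 (nJ J HJ) nP)) scaler0.
rewrite (reindex_onto (fun c : {ffun idx -> {set idx}} => \bigcup_(J in mu) c J)
   (fun nu => [ffun J => if J \in mu then [set B in nu | B \subset J] else set0])); last first.
  move=> nu /andP [Hnu /forallP Hall]; apply/setP => B; apply/bigcupP/idP.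
    by case=> J HJ; rewrite ffunE HJ inE => /andP [].
  move=> HB; case/and3P: (Hnu) => cn tn n0.
  have /set0Pn [x xB] : B != set0 by apply: contraNneq n0 => <-.
  have : x \in cover mu by rewrite (cover_partition Hmu) -(eqP cn); apply/bigcupP; exists B.
  case/bigcupP => J HJ xJ; exists J => //; rewrite ffunE HJ.
  have := implyP (Hall J) HJ => HP.
  move: xJ; rewrite -{1}(cover_partition HP) => /bigcupP [B' HB' xB'].
  have HB'nu : B' \in nu by move: HB'; rewrite inE; case/andP.
  by rewrite (triv_eq tn HB HB'nu xB xB').
apply: eq_big.
  move=> c; rewrite /valid; apply/andP/forallP => [[/andP [Hp /forallP Hall] /eqP Eh] J|Hv].
    move/ffunP: Eh => /(_ J); rewrite ffunE => <-.
    by case: ifP => HJ //; have := Hall J; rewrite HJ.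
  have Hc' : forall J, J \in mu -> partition (c J) J by move=> J HJ; have := Hv J; rewrite HJ.
  split.
    apply/andP; split; first exact: part_bigcup Hmu Hc'.
    by apply/forallP => J; apply/implyP => HJ; rewrite (nuJ_bigcup Hmu Hc' HJ) Hc'.
  apply/eqP/ffunP => J; rewrite ffunE; case: ifP => HJ; first exact: (nuJ_bigcup Hmu Hc' HJ).
  by have := Hv J; rewrite HJ => /eqP.
move=> c /andP [/andP [Hp /forallP Hall] /eqP Eh].
have Hv : forall J, if J \in mu then partition (c J) J else c J == set0.
  move=> J; move/ffunP: Eh => /(_ J); rewrite ffunE => <-.
  by case: ifP => HJ //; have := Hall J; rewrite HJ.
have Hc' : forall J, J \in mu -> partition (c J) J by move=> J HJ; have := Hv J; rewrite HJ.
have := part_bigcup Hmu Hc' => /and3P [_ tn n0].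
have -> : G I mu (total_map F (restr (\bigcup_(J in mu) c J) v)) = G I mu (fun J => F J (c J) v).
  apply: depG => J HJ; apply: W_val => //; first exact: nJ.
    exact: Hc'.
  by apply/subsetP => B HB; apply/bigcupP; exists J.
have [ev|nev] := boolP [forall J in mu, forall B in c J, ~~ odd #|B|].
  rewrite (sgn_comp R Hmu Hc') ?scalerA //.
  move=> J B HJ HB; have := implyP (forallP ev J) HJ => /forallP /(_ B).
  by rewrite HB.
move/forallPn: nev => [J]; rewrite negb_imply => /andP [HJ /forallPn [B]].
rewrite negb_imply negbK => /andP [HB oB].
have -> : G I mu (fun J => F J (c J) v) = 0.
  apply: (ml_zero depG linG HJ) => /=.
  by apply: (mor_zero HF (nJ J HJ) (Hc' J HJ) HB); apply: evE.
by rewrite !scaler0.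
Qed.
End Final.

Unset Implicit Arguments.

Theorem mainTheorem19 (R : fieldType) (k : nat) :
  (* f^- is again a morphism, and ^- is inverse to itself *)
  (forall (E E' : cube R k) (F : cube_family E E'),
      purely_even E -> purely_even E' -> is_morphism F ->
      is_morphism (minusF F) /\
      (forall I P v, minusF (minusF F) I P v = F I P v)) /\
  (* (id_E)^- = id_E *)
  (forall (E : cube R k) (F : cube_family E E),
      purely_even E -> is_morphism F ->
      map_eq (total_map F) (fun v => v) ->
      map_eq (total_map (minusF F)) (fun v => v)) /\
  (* (g o f)^- = g^- o f^- *)
  (forall (E E' E'' : cube R k) (F : cube_family E E') (G : cube_family E' E'')
          (H : cube_family E E''),
      purely_even E -> purely_even E' -> purely_even E'' ->
      is_morphism F -> is_morphism G -> is_morphism H ->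
      map_eq (total_map H) (fun v => total_map G (total_map F v)) ->
      map_eq (total_map (minusF H))
             (fun v => total_map (minusF G) (total_map (minusF F) v))) /\
  (* ^- respects products: projections and pairings are preserved *)
  (forall (E E' : cube R k) (P1 : cube_family (prodc E E') E)
          (P2 : cube_family (prodc E E') E'),
      purely_even E -> purely_even E' -> is_morphism P1 -> is_morphism P2 ->
      map_eq (total_map P1) (@fst_tot R k E E') ->
      map_eq (total_map P2) (@snd_tot R k E E') ->
      map_eq (total_map (minusF P1)) (@fst_tot R k E E') /\
      map_eq (total_map (minusF P2)) (@snd_tot R k E E')) /\
  (forall (E E' E'' : cube R k) (F : cube_family E E') (G : cube_family E E''),
      forall I P v, minusF (pairF F G) I P v = pairF (minusF F) (minusF G) I P v).
Proof.
split.
  move=> E E' F _ _ HF; split; first exact: minus_morph.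
  by move=> I P v; apply: minus_minus.
split.
  move=> E F _ HF H.
  exact: (minus_local (phi := fun I x => x) HF (fun I => erefl) H).
split.
  move=> E E' E'' F G H evE _ _ HF HG HH Hc.
  exact: (minus_comp evE HF HG HH Hc).
split.
  move=> E E' P1 P2 _ _ H1 H2 E1 E2; split.
    exact: (minus_local (phi := fun I x => x.1) H1 (fun I => erefl) E1).
  exact: (minus_local (phi := fun I x => x.2) H2 (fun I => erefl) E2).
by [].
Qed.
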